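(* Let $k$ be an odd positive integer, let $A,B$ be finite subsets of an abelian group, and let $C\subseteq A+B$. Let $\Gamma_C$ be the bipartite graph with vertex classes $A$ and $B$ (taken as disjoint copies) in which $a\in A$ and $b\in B$ are adjacent if and only if $a+b\in C$. Suppose that for every pair $(a,b)\in A\times B$ there are at least $w>0$ walks of length $k$ in $\Gamma_C$ from $a$ to $b$. Then $|A+B|\le |C|^k/w$.
   Context: For subsets $X,Y$ of an abelian group, $X+Y=\{x+y:x\in X,y\in Y\}$. A walk of length $k$ is a sequence of $k+1$ vertices with consecutive vertices adjacent. *)

(* Defs.v *)
From HB Require Import structures.
From mathcomp Require Import all_boot all_order all_algebra.
From mathcomp Require Import finmap.
Set Implicit Arguments. Unset Strict Implicit. Unset Printing Implicit Defensive.
Import Order.TTheory GRing.Theory Num.Theory.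
Local Open Scope fset_scope.
Local Open Scope ring_scope.

Definition sumset (G : zmodType) (X Y : {fset G}) : {fset G} :=
  [fset (x + y) | x in X, y in Y].

Definition bvert (G : zmodType) (A B : {fset G}) : finType := (A + B)%type.

Definition gammaC_adj (G : zmodType) (A B C : {fset G})
  (u v : bvert A B) : bool :=
  match u, v with
  | inl a, inr b => (val a + val b) \in C
  | inr b, inl a => (val a + val b) \in C
  | _, _ => false
  end.

Definition nwalks (G : zmodType) (A B C : {fset G}) (k : nat)
  (u v : bvert A B) : nat :=
  #|[set t : k.+1.-tuple (bvert A B) |
      [&& tnth t ord0 == u, tnth t ord_max == v &
          [forall i : 'I_k,
             gammaC_adj C (tnth t (widen_ord (leqnSn k) i))
                          (tnth t (lift ord0 i))]]]|%N.

(* Main.v *)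
Require Import Defs.
From HB Require Import structures.
From mathcomp Require Import all_boot all_order all_algebra.
From mathcomp Require Import finmap.
Set Implicit Arguments. Unset Strict Implicit.
Import Order.TTheory GRing.Theory Num.Theory.
Local Open Scope fset_scope.
Local Open Scope ring_scope.

Definition vv (G : zmodType) (A B : {fset G}) (u : bvert A B) : G :=
  match u with inl a => val a | inr b => val b end.

Lemma adj_sum (G : zmodType) (A B C : {fset G}) (u v : bvert A B) :
  gammaC_adj C u v -> vv u + vv v \in C.
Proof. by case: u => a; case: v => b //=; rewrite addrC. Qed.

Lemma adj_det (G : zmodType) (A B C : {fset G}) (u v v' : bvert A B) :
  gammaC_adj C u v -> gammaC_adj C u v' -> vv v = vv v' -> v = v'.
Proof.
by case: u => a; case: v => b //; case: v' => b' //= _ _ /val_inj ->.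
Qed.

Lemma walk_adj (G : zmodType) (A B C : {fset G}) (k : nat)
  (t : k.+1.-tuple (bvert A B)) :
  [forall i : 'I_k, gammaC_adj C (tnth t (widen_ord (leqnSn k) i))
                          (tnth t (lift ord0 i))] ->
  forall j, (j < k)%N -> gammaC_adj C (tnth t (inord j)) (tnth t (inord j.+1)).
Proof.
move/forallP=> H j hj; have := H (Ordinal hj).
have -> : widen_ord (leqnSn k) (Ordinal hj) = inord j.
  by apply: val_inj; rewrite /= inordK // ltnS ltnW.
have -> // : lift ord0 (Ordinal hj) = inord j.+1.
by apply: val_inj; rewrite /= inordK.
Qed.

Lemma alt_sum (G : zmodType) (x x' : nat -> G) (k : nat) :
  (forall i, (i < k)%N -> x i + x i.+1 = x' i + x' i.+1) -> odd k ->
  x 0%N + x k = x' 0%N + x' k.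
Proof.
move=> E ok.
have D : forall j, (j <= k)%N ->
    x j - x' j = if odd j then x' 0%N - x 0%N else x 0%N - x' 0%N.
  elim=> [|j IH] hj; first done.
  have hjk : (j < k)%N by [].
  have -> : x j.+1 - x' j.+1 = - (x j - x' j).
    have e : x j.+1 = x' j + x' j.+1 - x j by rewrite -(E j hjk) addrC addKr.
    by rewrite e opprB addrAC addrK.
  rewrite (IH (ltnW hj)) /=.
  by case: (odd j); rewrite /= opprB.
have Dk := D k (leqnn k); rewrite ok in Dk.
have -> : x k = x' 0%N - x 0%N + x' k by rewrite -Dk subrK.
by rewrite addrA [x 0%N + _]addrC subrK.
Qed.

Theorem lemma2p1 (R : realFieldType) (G : zmodType) (k : nat)
  (A B C : {fset G}) (w : R) :
  (0 < k)%N -> odd k ->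
  C `<=` sumset A B ->
  0 < w ->
  (forall (a : A) (b : B), w <= (nwalks C k (inl a) (inr b))%:R) ->
  (#|` sumset A B|%:R : R) <= (#|` C|%:R) ^+ k / w.
Proof.
move=> k0 ok _ w0 Hw.
set S := sumset A B.
have ex : forall s : S, exists ab : A * B, val ab.1 + val ab.2 == val s.
  move=> s; have /imfset2P [x xA [y yB ->]] := valP s.
  by exists ([` xA], [` yB]).
pose rep (s : S) := xchoose (ex s).
have repP : forall s : S, val (rep s).1 + val (rep s).2 = val s.
  by move=> s; apply/eqP; exact: (xchooseP (ex s)).
pose W (s : S) := [set t : k.+1.-tuple (bvert A B) |
      [&& tnth t ord0 == inl (rep s).1, tnth t ord_max == inr (rep s).2 &
          [forall i : 'I_k,
             gammaC_adj C (tnth t (widen_ord (leqnSn k) i))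
                          (tnth t (lift ord0 i))]]].
have key : (\sum_(s : S) #|W s| <= #|` C| ^ k)%N.
  rewrite (eq_bigr (fun s => \sum_(t in W s) 1%N)); last first.
    by move=> s _; rewrite sum1_card.
  rewrite pair_big_dep /=.
  set P := [set p : S * k.+1.-tuple (bvert A B) | p.2 \in W p.1].
  have -> : (\sum_(p | true && (p.2 \in W p.1)) 1 = #|P|)%N.
    by rewrite -sum1_card; apply: eq_bigl => p; rewrite /P !inE.
  have i0 : inord 0 = ord0 :> 'I_k.+1 by apply: val_inj; rewrite /= inordK.
  have ik : inord k = ord_max :> 'I_k.+1 by apply: val_inj; rewrite /= inordK.
  case: (set_0Vmem P) => [->|[p0 Hp0]]; first by rewrite cards0.
  have Hw0 : [forall i : 'I_k,
             gammaC_adj C (tnth p0.2 (widen_ord (leqnSn k) i))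
                          (tnth p0.2 (lift ord0 i))].
    by move: Hp0; rewrite !inE => /and3P [].
  pose c0 : C := [` adj_sum (walk_adj Hw0 k0)].
  pose F (p : S * k.+1.-tuple (bvert A B)) : {ffun 'I_k -> C} :=
    [ffun i : 'I_k => insubd c0 (vv (tnth p.2 (inord i)) + vv (tnth p.2 (inord i.+1)))].
  rewrite -(card_in_imset (f := F)); last first.
    move=> [s t] [s' t']; rewrite !inE /= => /and3P [h0 hk hw] /and3P [h0' hk' hw'] EF.
    have E : forall j, (j < k)%N -> vv (tnth t (inord j)) + vv (tnth t (inord j.+1))
        = vv (tnth t' (inord j)) + vv (tnth t' (inord j.+1)).
      move=> j hj; have := congr1 (fun f : {ffun 'I_k -> C} => val (f (Ordinal hj))) EF.
      rewrite /= !ffunE /=.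
      by rewrite (insubdK _ (adj_sum (walk_adj hw hj))) (insubdK _ (adj_sum (walk_adj hw' hj))).
    have ss : s = s'.
      apply: val_inj; rewrite -repP -(repP s').
      have := alt_sum (x := fun j => vv (tnth t (inord j)))
                      (x' := fun j => vv (tnth t' (inord j))) E ok.
      by rewrite /= i0 ik (eqP h0) (eqP hk) (eqP h0') (eqP hk').
    subst s'.
    have tt : forall j, (j < k.+1)%N -> tnth t (inord j) = tnth t' (inord j).
      elim=> [|j IH] hj; first by rewrite i0 (eqP h0) (eqP h0').
      have hj' : (j < k)%N by [].
      apply: (adj_det (walk_adj hw hj')).
        rewrite (IH (ltnW hj)); exact: (walk_adj hw' hj').
      apply: (addrI (vv (tnth t (inord j)))); rewrite E //.
      by rewrite (IH (ltnW hj)).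
    by congr pair; apply: eq_from_tnth => i; rewrite -(inord_val i); exact: tt.
  apply: leq_trans (max_card _) _.
  by rewrite card_ffun card_ord cardfE.
rewrite ler_pdivlMr //.
have -> : (#|` S|%:R * w = \sum_(s : S) w).
  by rewrite sumr_const cardfE mulr_natl.
apply: (le_trans (y := \sum_(s : S) (#|W s|%:R : R))).
  by apply: ler_sum => s _; exact: Hw.
by rewrite -natr_sum -natrX ler_nat.
Qed.
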